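(* Let $\sigma=(g_1,\dots,g_T)\in\Sigma$ and $t\in[T]$. Let $\lambda_{t-1}$ and $\lambda_t$ be the optimal Lagrange multipliers associated with the inventory constraint of the offline problems for $\sigma^{[1:t-1]}$ and $\sigma^{[1:t]}$ respectively (with $\lambda_0=0$), and let $\tilde v_t$ be the $t$-th coordinate of an optimal solution of the offline problem for $\sigma^{[1:t]}$. Then $$\eta_{OPT}(\sigma^{[1:t]})-\eta_{OPT}(\sigma^{[1:t-1]})\ \ge\ g_t(\tilde v_t)-\lambda_t\tilde v_t,$$ and $$\eta_{OPT}(\sigma^{[1:t]})-\eta_{OPT}(\sigma^{[1:t-1]})\ \le\ g_t(\tilde v_t)-\lambda_{t-1}\tilde v_t\ \le\ g_t(\hat v_t),$$ where $\hat v_t$ is a maximizer of $g_t$ over $[0,\Delta]$.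
   Context: Fix $\Delta>0$ and $0<m\le M$. Let $\mathcal G$ be the family of all functions $g:[0,\Delta]\to\mathbb{R}$ that are concave, increasing and differentiable on $[0,\Delta]$ with $g(0)=0$ and $g'(0)\in[m,M]$. An input is a finite sequence $\sigma=(g_1,\dots,g_T)$, $T\ge1$, $g_t\in\mathcal G$; $\Sigma$ is the set of all inputs. For $0\le t\le T$, $\sigma^{[1:t]}=(g_1,\dots,g_t)$ ($\sigma^{[1:0]}$ is empty). For a finite sequence $(g_1,\dots,g_t)$, the offline problem is $\max\sum_{\tau=1}^t g_\tau(v_\tau)$ subject to $\sum_{\tau=1}^t v_\tau\le\Delta$ and $v_\tau\ge0$, and $\eta_{OPT}(\sigma^{[1:t]})$ denotes its optimal value; $\eta_{OPT}$ of the empty sequence is $0$. The inventory constraint is the constraint $\sum_\tau v_\tau\le\Delta$. *)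

(* Defs.v *)
From Stdlib Require Import Reals Lra Lia.
Open Scope R_scope.

Fixpoint sum1 (n : nat) (f : nat -> R) : R :=
  match n with
  | O => 0
  | S k => sum1 k f + f (S k)
  end.

Definition derive_in (Delta : R) (g : R -> R) (x l : R) : Prop :=
  forall eps, 0 < eps -> exists delta, 0 < delta /\
    forall h, h <> 0 -> Rabs h < delta -> 0 <= x + h <= Delta ->
      Rabs ((g (x + h) - g x) / h - l) < eps.

Definition in_G (Delta m M : R) (g : R -> R) : Prop :=
  (forall x y a, 0 <= x <= Delta -> 0 <= y <= Delta -> 0 <= a <= 1 ->
     a * g x + (1 - a) * g y <= g (a * x + (1 - a) * y)) /\
  (forall x y, 0 <= x <= Delta -> 0 <= y <= Delta -> x <= y ->
     g x <= g y) /\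
  (forall x, 0 <= x <= Delta -> exists l, derive_in Delta g x l) /\
  g 0 = 0 /\
  (exists l, derive_in Delta g 0 l /\ m <= l <= M).

Definition feasible (Delta : R) (n : nat) (v : nat -> R) : Prop :=
  (forall tau, (1 <= tau <= n)%nat -> 0 <= v tau) /\ sum1 n v <= Delta.

Definition objective (g : nat -> R -> R) (n : nat) (v : nat -> R) : R :=
  sum1 n (fun tau => g tau (v tau)).

Definition is_opt_value (Delta : R) (g : nat -> R -> R) (n : nat) (eta : R) : Prop :=
  is_lub (fun y => exists v, feasible Delta n v /\ y = objective g n v) eta.

Definition is_opt_sol (Delta : R) (g : nat -> R -> R) (n : nat) (v : nat -> R) : Prop :=
  feasible Delta n v /\
  forall w, feasible Delta n w -> objective g n w <= objective g n v.

Definition lagrangian (Delta : R) (g : nat -> R -> R) (n : nat) (lam : R)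
  (v : nat -> R) : R :=
  objective g n v + lam * (Delta - sum1 n v).

(* lam is an optimal Lagrange multiplier of the inventory constraint:
   lam >= 0 and the optimal value equals the supremum of the Lagrangian
   over the remaining domain v_tau in [0, Delta] (no duality gap). *)
Definition lagrange_mult (Delta : R) (g : nat -> R -> R) (n : nat) (lam : R) : Prop :=
  0 <= lam /\
  exists eta, is_opt_value Delta g n eta /\
    is_lub (fun y => exists v, (forall tau, (1 <= tau <= n)%nat -> 0 <= v tau <= Delta)
                               /\ y = lagrangian Delta g n lam v) eta.

(* Main.v *)
Require Import Defs.
From Stdlib Require Import Reals Lra Lia.
Open Scope R_scope.

Lemma sum1_ext n f f' : (forall k, (1 <= k <= n)%nat -> f k = f' k) -> sum1 n f = sum1 n f'.
Proof.
  induction n; simpl; intros H; auto.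
  rewrite IHn by (intros; apply H; lia). rewrite (H (S n)) by lia. reflexivity.
Qed.

Lemma sum1_nonneg n f : (forall k, (1 <= k <= n)%nat -> 0 <= f k) -> 0 <= sum1 n f.
Proof.
  induction n; simpl; intros H; [lra|].
  assert (0 <= sum1 n f) by (apply IHn; intros; apply H; lia).
  assert (0 <= f (S n)) by (apply H; lia). lra.
Qed.

Lemma sum1_le_term n f : (forall k, (1 <= k <= n)%nat -> 0 <= f k) ->
  forall k, (1 <= k <= n)%nat -> f k <= sum1 n f.
Proof.
  induction n; simpl; intros H k Hk; [lia|].
  assert (0 <= sum1 n f) by (apply sum1_nonneg; intros; apply H; lia).
  destruct (Nat.eq_dec k (S n)) as [->|Hne]; [lra|].
  assert (f k <= sum1 n f) by (apply IHn; [intros; apply H; lia| lia]).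
  assert (0 <= f (S n)) by (apply H; lia). lra.
Qed.

Lemma lub_unique (E : R -> Prop) a b : is_lub E a -> is_lub E b -> a = b.
Proof.
  intros [Ha1 Ha2] [Hb1 Hb2]. apply Rle_antisym; auto.
Qed.

Theorem lemma2 (Delta m M : R) (HDelta : 0 < Delta) (Hm : 0 < m) (HmM : m <= M)
  (T : nat) (g : nat -> R -> R) (HT : (1 <= T)%nat)
  (Hg : forall tau, (1 <= tau <= T)%nat -> in_G Delta m M (g tau))
  (t : nat) (Ht : (1 <= t <= T)%nat)
  (eta_prev eta_t lam_prev lam_t : R) (vt : nat -> R) (vhat : R) :
  is_opt_value Delta g (t - 1) eta_prev ->
  is_opt_value Delta g t eta_t ->
  lagrange_mult Delta g (t - 1) lam_prev ->
  lagrange_mult Delta g t lam_t ->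
  is_opt_sol Delta g t vt ->
  (0 <= vhat <= Delta /\ forall x, 0 <= x <= Delta -> g t x <= g t vhat) ->
  eta_t - eta_prev >= g t (vt t) - lam_t * vt t /\
  eta_t - eta_prev <= g t (vt t) - lam_prev * vt t /\
  g t (vt t) - lam_prev * vt t <= g t vhat.
Proof.
  destruct t as [|n]; [lia|].
  replace (S n - 1)%nat with n by lia.
  intros Hprev Htv [Hlp [e1 [He1 Hl1]]] [Hlt [e2 [He2 Hl2]]] [[Hvn Hvs] Hvopt] [Hvh Hvmax].
  pose proof (lub_unique _ _ _ He1 Hprev) as E1. subst e1.
  pose proof (lub_unique _ _ _ He2 Htv) as E2. subst e2.
  assert (Hvt_le : forall k, (1 <= k <= S n)%nat -> 0 <= vt k <= Delta).
  { intros k Hk. split; [auto|]. pose proof (sum1_le_term _ _ Hvn k Hk). lra. }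
  assert (Eeta : eta_t = objective g (S n) vt).
  { destruct Htv as [Hu Hl]. apply Rle_antisym.
    - apply Hl. intros y [w [Hw ->]]. apply Hvopt; auto.
    - apply Hu. exists vt. split; [split; auto | reflexivity]. }
  unfold objective in Eeta; simpl in Eeta.
  simpl in Hvs.
  assert (Hsn : 0 <= sum1 n vt) by (apply sum1_nonneg; intros; apply Hvn; lia).
  assert (H0 : 0 <= vt (S n) <= Delta) by (apply Hvt_le; lia).
  split; [|split].
  -
    assert (eta_prev <= eta_t - (g (S n) (vt (S n)) - lam_t * vt (S n))); [|lra].
    destruct Hprev as [_ Hl]. apply Hl. intros y [w [[Hwn Hws] ->]].
    set (w' := fun k => if Nat.eq_dec k (S n) then vt (S n) else w k).
    assert (Hw' : lagrangian Delta g (S n) lam_t w' <= eta_t).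
    { destruct Hl2 as [Hu _]. apply Hu. exists w'. split; [|reflexivity].
      intros tau Htau. unfold w'. destruct (Nat.eq_dec tau (S n)); [lra|].
      assert (tau <= n)%nat by lia.
      split; [apply Hwn; lia|].
      pose proof (sum1_le_term _ _ Hwn tau ltac:(lia)). lra. }
    unfold lagrangian, objective in Hw'. simpl in Hw'.
    assert (Ew1 : sum1 n (fun tau => g tau (w' tau)) = sum1 n (fun tau => g tau (w tau))).
    { apply sum1_ext. intros k Hk. unfold w'. destruct (Nat.eq_dec k (S n)); [lia|auto]. }
    assert (Ew2 : sum1 n w' = sum1 n w).
    { apply sum1_ext. intros k Hk. unfold w'. destruct (Nat.eq_dec k (S n)); [lia|auto]. }
    rewrite Ew1, Ew2 in Hw'. unfold w' in Hw'.
    destruct (Nat.eq_dec (S n) (S n)); [|congruence].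
    unfold objective.
    assert (0 <= lam_t * (Delta - sum1 n w)) by (apply Rmult_le_pos; lra).
    nra.
  -
    destruct Hl1 as [Hu _].
    assert (Hle : lagrangian Delta g n lam_prev vt <= eta_prev).
    { apply Hu. exists vt. split; [|reflexivity]. intros; apply Hvt_le; lia. }
    unfold lagrangian, objective in Hle.
    assert (lam_prev * vt (S n) <= lam_prev * (Delta - sum1 n vt)) by (apply Rmult_le_compat_l; lra).
    lra.
  - assert (g (S n) (vt (S n)) <= g (S n) vhat) by (apply Hvmax; lra).
    assert (0 <= lam_prev * vt (S n)) by (apply Rmult_le_pos; lra). lra.
Qed.
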